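(* Let $m\ge 1$ and $0\le k\le m$ be integers. Let $U_1$ be the $2m\times 2m$ integer matrix whose entries in positions $(i,i+1)$ and $(i+1,i)$ ($1\le i\le 2m-1$) are $1$ and all of whose other entries are $0$. For a subset $\alpha\subseteq\{1,\dots,2m\}$, let $U_1(\alpha)$ denote the submatrix of $U_1$ obtained by deleting the rows and columns with indices in $\alpha$. Then $$\sum_{\alpha\subseteq\{1,\dots,2m\},\ |\alpha|=2k}\mathrm{Hf}\big(U_1(\alpha)\big)=\binom{m+k}{m-k}.$$
   Context: For a symmetric matrix $A=(a_{ij})$ of even order $n$ over a commutative ring, the hafnian is $\mathrm{Hf}(A)=\sum a_{i_1i_2}a_{i_3i_4}\cdots a_{i_{n-1}i_n}$, where the sum runs over all partitions of the index set of $A$ into $n/2$ disjoint unordered pairs $\{i_1,i_2\},\dots,\{i_{n-1},i_n\}$ (each partition counted once). The hafnian of the empty ($0\times 0$) matrix is $1$. *)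

(* Defs.v *)
From HB Require Import structures.
From mathcomp Require Import all_boot all_order all_algebra.
Set Implicit Arguments. Unset Strict Implicit. Unset Printing Implicit Defensive.
Import GRing.Theory.
Local Open Scope ring_scope.

Definition perfect_matching (n : nat) (P : {set {set 'I_n}}) : bool :=
  partition P [set: 'I_n] && [forall B in P, #|B| == 2%N].

(* Entry a_{ij} of A for an unordered pair B = {i, j} (with i < j). *)
Definition pair_entry (R : comPzRingType) (n : nat) (A : 'M[R]_n)
    (B : {set 'I_n}) : R :=
  \sum_(i in B) \sum_(j in B | (i < j)%N) A i j.

(* Hafnian: sum over all partitions of the index set into unordered pairs
   (each counted once) of the product of the corresponding entries.
   For n = 0 the only matching is the empty one, so Hf = 1. *)
Definition hafnian (R : comPzRingType) (n : nat) (A : 'M[R]_n) : R :=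
  \sum_(P : {set {set 'I_n}} | perfect_matching P) \prod_(B in P) pair_entry A B.

Definition U1 (m : nat) : 'M[int]_(m.*2) :=
  \matrix_(i, j) (((i.+1 == j :> nat) || (j.+1 == i :> nat))%:R : int).

(* U(alpha): delete rows and columns indexed by alpha; the remaining indices
   are kept in increasing order (enum_val enumerates ~: alpha increasingly). *)
Definition del_submx (R : Type) (n : nat) (A : 'M[R]_n) (alpha : {set 'I_n}) :
    'M[R]_(#|~: alpha|) :=
  mxsub (fun i : 'I_#|~: alpha| => enum_val i) (fun j : 'I_#|~: alpha| => enum_val j) A.

(* Main.v *)
Require Import Defs.
From HB Require Import structures.
From mathcomp Require Import all_boot all_order all_algebra.
From mathcomp Require Import zify.
Import GRing.Theory.
Set Implicit Arguments. Unset Strict Implicit. Unset Printing Implicit Defensive.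

Section Count.
Variable K : nat.

Definition isdom (B : {set 'I_K}) : bool :=
  [exists u : 'I_K, exists v : 'I_K, (u.+1 == v :> nat) && (B == [set u; v])].

Definition good (Q : {set {set 'I_K}}) : bool :=
  trivIset Q && [forall B in Q, isdom B].

Definition Sset n j := [set Q : {set {set 'I_K}} |
  [&& good Q, cover Q \subset [set x : 'I_K | x < n] & #|Q| == j]].

Lemma isdomP B : reflect (exists u v : 'I_K, u.+1 = v :> nat /\ B = [set u; v]) (isdom B).
Proof.
apply: (iffP existsP) => [[u /existsP[v /andP[/eqP h /eqP ->]]]|[u [v [h ->]]]].
  by exists u, v.
by exists u; apply/existsP; exists v; rewrite h !eqxx.
Qed.

Lemma isdom_card B : isdom B -> #|B| = 2.
Proof.
case/isdomP=> u [v [h ->]]; rewrite cards2.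
case: eqP => // e; move: h; rewrite e; lia.
Qed.

Lemma isdom2 (u v : 'I_K) : u != v -> isdom [set u; v] = (u.+1 == v :> nat) || (v.+1 == u :> nat).
Proof.
move=> nuv; apply/isdomP/idP => [[u' [v' [h e]]]|].
  have : u \in [set u'; v'] by rewrite -e !inE eqxx.
  have : v \in [set u'; v'] by rewrite -e !inE eqxx orbT.
  rewrite !inE => /orP[] /eqP hv /orP[] /eqP hu; subst.
  - by rewrite eqxx in nuv.
  - by rewrite h eqxx orbT.
  - by rewrite h eqxx.
  - by rewrite eqxx in nuv.
case/orP=> /eqP h; first by exists u, v.
by exists v, u; split => //; rewrite setUC.
Qed.

Lemma good_partition Q : good Q -> partition Q (cover Q).
Proof.
case/andP=> tQ /forallP dQ; rewrite /partition eqxx tQ /=.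
apply/negP => Q0; have := dQ set0; rewrite Q0 /= => /isdom_card.
by rewrite cards0.
Qed.

Lemma good_card Q : good Q -> #|cover Q| = (#|Q| * 2)%N.
Proof.
move=> gQ; apply: (card_uniform_partition _ (good_partition gQ)).
by move=> B BQ; case/andP: gQ => _ /forallP /(_ B); rewrite BQ => /isdom_card.
Qed.

Lemma good_set0 : good set0.
Proof.
rewrite /good /trivIset /cover !big_set0 cards0 /=.
by apply/forallP => B; rewrite inE.
Qed.

Lemma Sset_small n j : n <= 1 -> #|Sset n j| = (j == 0%N).
Proof.
move=> hn.
have Q0 : forall Q, good Q -> cover Q \subset [set x : 'I_K | x < n] -> Q = set0.
  move=> Q /andP[_ /forallP dQ] cQ; apply/setP => B; rewrite inE.
  apply/negP => BQ; have := dQ B; rewrite BQ /= => /isdomP[u [v [h e]]].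
  have : v \in cover Q by apply/bigcupP; exists B => //; rewrite e !inE eqxx orbT.
  move/(subsetP cQ); rewrite inE; lia.
case: j => [|j].
  rewrite (_ : Sset n 0 = [set set0]) ?cards1 //; apply/setP => Q; rewrite !inE.
  apply/idP/idP => [/and3P[gQ cQ _]|/eqP->]; first by rewrite (Q0 _ gQ cQ).
  by rewrite good_set0 cards0 /cover big_set0 sub0set.
rewrite (_ : Sset n j.+1 = set0) ?cards0 //; apply/setP => Q; rewrite !inE.
apply/negP => /and3P[gQ cQ]; by rewrite (Q0 _ gQ cQ) cards0.
Qed.

Lemma Sset_rec n j : n.+2 <= K ->
  #|Sset n.+2 j| = (#|Sset n.+1 j| + (if j is j'.+1 then #|Sset n j'| else 0))%N.
Proof.
move=> hn.
have hx : n < K by lia.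
have hy : n.+1 < K by lia.
pose x := Ordinal hx; pose y := Ordinal hy; pose d := [set x; y].
have dom_d : isdom d by apply/isdomP; exists x, y.
have xd : x \in d by rewrite !inE eqxx.
have yd : y \in d by rewrite !inE eqxx orbT.
have incov : forall (Q : {set {set 'I_K}}) B z, B \in Q -> z \in B -> z \in cover Q.
  by move=> Q B z BQ zB; apply/bigcupP; exists B.
rewrite -(cardsID [set Q : {set {set 'I_K}} | d \in Q] (Sset n.+2 j)).
have -> : Sset n.+2 j :\: [set Q : {set {set 'I_K}} | d \in Q] = Sset n.+1 j.
  apply/setP => Q; rewrite !inE.
  apply/idP/idP => [/andP[dQ /and3P[gQ cQ ->]]|/and3P[gQ cQ ->]].
    rewrite gQ andbT /=; apply/subsetP => z /bigcupP[B BQ zB].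
    have := gQ; case/andP=> _ /forallP /(_ B); rewrite BQ /= => /isdomP[u [v [h e]]].
    have : v \in cover Q by apply: (incov _ B); rewrite // e !inE eqxx orbT.
    move/(subsetP cQ); rewrite inE => vlt.
    have vn : v != n.+1 :> nat.
      apply/eqP => vn; move: dQ; apply/negP; rewrite negbK.
      suff <- : B = d by [].
      rewrite e.
      by congr [set _; _]; apply: val_inj => /=; lia.
    move: zB; rewrite e !inE => /orP[] /eqP ->; clear -h vlt vn; lia.
  rewrite gQ andbT /=; apply/andP; split.
    apply/negP => dQ; have := incov Q d y dQ yd; move/(subsetP cQ); rewrite inE /=; lia.
  apply: (subset_trans cQ); apply/subsetP => z; rewrite !inE; lia.
case: j => [|j].
  rewrite (_ : _ :&: _ = set0) ?cards0 ?addn0 //; apply/setP => Q; rewrite !inE.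
  apply/negP => /andP[/and3P[_ _ /eqP /cards0_eq Q0] ]; by rewrite Q0 inE.
rewrite addnC; congr (_ + _)%N.
have dnot : forall Q, Q \in Sset n j -> d \notin Q.
  move=> Q; rewrite inE => /and3P[_ cQ _]; apply/negP => dQ.
  have := incov Q d y dQ yd; move/(subsetP cQ); rewrite inE /=; lia.
rewrite -(card_in_imset (f := fun Q => d |: Q) (D := Sset n j)); last first.
  move=> Q1 Q2 h1 h2 /= e; by rewrite -(setU1K (dnot _ h1)) e setU1K // dnot.
apply: eq_card => Q; rewrite !inE.
apply/andP/imsetP => [[/and3P[gQ cQ /eqP cardQ] dQ]|[Q' Q'S ->]].
  exists (Q :\ d); last by rewrite setD1K.
  have tQ : trivIset Q by case/andP: gQ.
  rewrite inE; apply/and3P; split.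
  - case/andP: gQ => _ /forallP dQ'; apply/andP; split.
      by apply: (trivIsetS _ tQ); apply: subD1set.
    by apply/forallP => B; apply/implyP; rewrite inE => /andP[_ BQ]; have := dQ' B; rewrite BQ.
  - apply/subsetP => z /bigcupP[B]; rewrite !inE => /andP[Bd BQ] zB.
    have := gQ; case/andP=> _ /forallP /(_ B); rewrite BQ /= => /isdomP[u [v [h e]]].
    have : v \in cover Q by apply: (incov _ B); rewrite // e !inE eqxx orbT.
    move/(subsetP cQ); rewrite inE => vlt.
    have dis : [disjoint B & d] by move/trivIsetP: tQ; apply.
    have vn1 : v != n.+1 :> nat.
      apply/eqP => vn; have vy : v = y by apply: val_inj.
      have vB : v \in B by rewrite e !inE eqxx orbT.
      by move: (disjointFr dis vB); rewrite vy yd.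
    have vn : v != n :> nat.
      apply/eqP => vn; have vy : v = x by apply: val_inj.
      have vB : v \in B by rewrite e !inE eqxx orbT.
      by move: (disjointFr dis vB); rewrite vy xd.
    move: zB; rewrite e !inE => /orP[] /eqP ->; clear -h vlt vn vn1; lia.
  - by move: cardQ; rewrite (cardsD1 d Q) dQ add1n => -[->].
move: (Q'S); rewrite inE => /and3P[gQ cQ /eqP cardQ].
have dQ' := dnot _ Q'S.
have tQ : trivIset Q' by case/andP: gQ.
have s0 : set0 \notin Q' by have := good_partition gQ; case/and3P.
have disQ : {in Q', forall B : {set 'I_K}, [disjoint d & B]}.
  move=> B BQ; rewrite disjoints_subset; apply/subsetP => z zd; rewrite inE; apply/negP => zB.
  have := incov Q' B z BQ zB; move/(subsetP cQ).
  by move: zd; rewrite !inE => /orP[] /eqP -> /= => H0; clear -H0; lia.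
have [tU _] := trivIsetU1 disQ tQ s0.
split; last by rewrite setU11.
apply/and3P; split.
- rewrite /good tU /=; apply/forallP => B; apply/implyP; rewrite !inE => /orP[/eqP -> //|BQ].
  by case/andP: gQ => _ /forallP /(_ B); rewrite BQ.
- apply/subsetP => z /bigcupP[B]; rewrite !inE => /orP[/eqP -> | BQ] zB.
    by move: zB; rewrite !inE => /orP[] /eqP -> /=; clear; lia.
  have := incov Q' B z BQ zB; move/(subsetP cQ); rewrite !inE => H0; clear -H0; lia.
- by rewrite cardsU1 dQ' cardQ.
Qed.

Lemma Sset_count : forall n, n <= K -> forall j, #|Sset n j| = 'C(n - j, j).
Proof.
suff : forall n, (n <= K -> forall j, #|Sset n j| = 'C(n - j, j)) /\
                 (n.+1 <= K -> forall j, #|Sset n.+1 j| = 'C(n.+1 - j, j)).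
  by move=> H n; case: (H n).
elim=> [|n [IH0 IH]].
  split=> _ j; rewrite Sset_small //.
    by case: j.
  by case: j => [|[|j]].
split=> // hn j; rewrite Sset_rec //.
rewrite IH; last by apply: ltnW.
case: j => [|j]; first by rewrite !bin0 addn0.
rewrite IH0; last by apply: ltnW; apply: ltnW.
case: (leqP j n) => hj.
  rewrite (_ : n.+2 - j.+1 = (n - j).+1)%N; last by rewrite subSS subSn.
  by rewrite binS subSS.
rewrite (_ : n.+2 - j.+1 = 0)%N; last by lia.
rewrite (_ : n.+1 - j.+1 = 0)%N; last by lia.
rewrite (_ : n - j = 0)%N; last by lia.
by rewrite !bin0n; case: j hj.
Qed.
End Count.

Section Main.
Variable m : nat.
Variable alpha : {set 'I_(m.*2)}.
Let f := fun i : 'I_#|~: alpha| => enum_val i.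

Lemma f_inj : injective f.
Proof. exact: enum_val_inj. Qed.

Lemma imf : f @: setT = ~: alpha.
Proof.
apply/setP => x; apply/imsetP/idP => [[i _ ->]|xa]; first exact: enum_valP.
by exists (enum_rank_in xa x) => //; rewrite /f enum_rankK_in.
Qed.

Lemma entry i j : del_submx (U1 m) alpha i j =
  ((((f i).+1 == f j :> nat) || ((f j).+1 == f i :> nat))%:R)%R.
Proof. by rewrite /del_submx /mxsub /U1 !mxE. Qed.

Lemma pe (B : {set 'I_#|~: alpha|}) : #|B| == 2 ->
  pair_entry (del_submx (U1 m) alpha) B = ((isdom (f @: B))%:R)%R.
Proof.
case/cards2P=> a [b [nab ->]].
rewrite imsetU1 imset_set1 isdom2; last by rewrite (inj_eq f_inj).
rewrite /pair_entry.
rewrite (eq_bigr (fun i : 'I_#|~: alpha| => (\sum_(j in [set a; b]) (if (i < j)%N then del_submx (U1 m) alpha i j else 0))%R)); last first.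
  by move=> i _; rewrite big_mkcondr.
have anb : a \notin [set b] by rewrite inE.
rewrite !big_setU1 // !big_set1 /= !big_setU1 // !big_set1 /= !ltnn.
case: (ltngtP a b) => hab.
- by rewrite entry GRing.add0r !GRing.addr0.
- by rewrite entry !GRing.add0r GRing.addr0 orbC.
- by move: nab; rewrite (ord_inj hab) eqxx.
Qed.

Definition SP := [set P : {set {set 'I_#|~: alpha|}} |
   perfect_matching P && [forall B in P, isdom (f @: B)]].
Definition SQ := [set Q : {set {set 'I_(m.*2)}} | good Q && (cover Q == ~: alpha)].

Lemma hf_SP : hafnian (del_submx (U1 m) alpha) = ((#|SP|)%:R)%R.
Proof.
rewrite /hafnian.
rewrite (eq_bigr (fun P : {set {set 'I_#|~: alpha|}} => (([forall B in P, isdom (f @: B)])%:R)%R)); last first.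
  move=> P /andP[_ /forallP c2].
  case: (boolP [forall B in P, isdom (f @: B)]) => [/forallP h|].
    rewrite big1 // => B BP; rewrite pe; last by have := c2 B; rewrite BP.
    by have := h B; rewrite BP /= => ->.
  move/forallPn => [B]; rewrite negb_imply => /andP[BP nd].
  rewrite (bigD1 B) //= pe; last by have := c2 B; rewrite BP.
  by rewrite (negbTE nd) GRing.mul0r.
rewrite (eq_bigr (fun P : {set {set 'I_#|~: alpha|}} => if [forall B in P, isdom (f @: B)] then 1%R else 0%R)); last first.
  by move=> P _; case: ([forall B in P, isdom (f @: B)]).
rewrite -big_mkcondr.
transitivity (((\sum_(P in SP) 1%N)%:R : int)%R); last by rewrite sum1_card.
rewrite natr_sum; apply: eq_bigl => P; by rewrite inE.
Qed.

Lemma SP_SQ : #|SP| = #|SQ|.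
Proof.
rewrite -(card_imset _ (imset_inj (imset_inj f_inj))).
apply: eq_card => Q; rewrite /SQ inE.
apply/imsetP/andP => [[P]|[gQ /eqP cQ]].
  rewrite inE => /andP[/andP[pP /forallP c2] /forallP dP] ->.
  have pQ : partition [set f @: B | B : {set 'I_#|~: alpha|} in P] (~: alpha).
    by move: (imset_partition P [set: 'I_#|~: alpha|] f_inj); rewrite imf pP.
  split; last by rewrite (cover_partition pQ).
  rewrite /good imset_trivIset; last exact: f_inj.
  rewrite (partition_trivIset pP) /=; apply/forallP => B'; apply/implyP.
  by case/imsetP => B BP ->; have := dP B; rewrite BP.
have sub : forall B, B \in Q -> f @: (f @^-1: B) = B.
  move=> B BQ; apply/setP => x; apply/imsetP/idP => [[i]|xB].
    by rewrite inE => ? ->.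
  have : x \in f @: setT by rewrite imf -cQ; apply/bigcupP; exists B.
  move=> /imsetP[i _ ei]; exists i => //; by rewrite inE -ei.
have eQ : [set f @: B | B : {set 'I_#|~: alpha|} in [set f @^-1: B | B : {set 'I_(m.*2)} in Q]] = Q.
  rewrite -imset_comp (eq_in_imset (g := id)) ?imset_id // => B BQ /=.

exists [set f @^-1: B | B : {set 'I_(m.*2)} in Q]; last by rewrite eQ.
rewrite inE; apply/andP; split; first (apply/andP; split).
- have := good_partition gQ; rewrite cQ => pq.
  by rewrite -(imset_partition _ _ f_inj) eQ imf.
- apply/forallP => B; apply/implyP => /imsetP[B' B'Q ->].
  rewrite -(card_imset _ f_inj) sub //.
  by case/andP: gQ => _ /forallP /(_ B'); rewrite B'Q => /isdom_card ->.
- apply/forallP => B; apply/implyP => /imsetP[B' B'Q ->].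
  by rewrite sub //; case/andP: gQ => _ /forallP /(_ B'); rewrite B'Q.
Qed.
End Main.

Unset Implicit Arguments.
Local Open Scope ring_scope.

Theorem mainTheorem3 (m k : nat) (hm : (1 <= m)%N) (hk : (k <= m)%N) :
  \sum_(alpha : {set 'I_(m.*2)} | #|alpha| == k.*2) hafnian (del_submx (U1 m) alpha)
  = ('C(m + k, m - k))%:R.
Proof.
rewrite (eq_bigr (fun alpha => ((#|SQ alpha|)%:R)%R)); last first.
  by move=> a _; rewrite hf_SP SP_SQ.
rewrite -natr_sum; congr (_%:R)%R.
have -> : 'C(m + k, m - k)%N = #|Sset (m.*2) (m.*2) (m - k)%N|.
  rewrite Sset_count //; congr 'C(_, _); rewrite -muln2; lia.
rewrite -sum1_card (partition_big (fun Q => ~: cover Q) (fun a : {set 'I_(m.*2)} => #|a| == k.*2)).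
  apply: eq_bigr => a ha; rewrite -sum1_card; apply: eq_bigl => Q.
  rewrite /SQ !inE; apply/idP/idP.
    case/andP=> gQ /eqP cQ; rewrite gQ cQ setCK eqxx andbT /=.
    apply/andP; split; first by apply/subsetP => x _; rewrite inE ltn_ord.
    have := good_card gQ; rewrite cQ; have := cardsC a; rewrite card_ord.
    move: ha => /eqP; move: #|a| #|~: a| #|Q| => x y z.
    rewrite -!muln2; lia.
  case/andP=> /and3P[gQ _ _] /eqP <-; by rewrite gQ setCK eqxx.
move=> Q; rewrite inE => /and3P[gQ _ /eqP cQ].
have := good_card gQ; have := cardsC (cover Q); rewrite card_ord cQ.
move: #|cover Q| #|~: cover Q| => x y; rewrite -!muln2; lia.
Qed.
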